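(* Let $(\Phi,D)$ and $(\Psi,E)$ be domain-free s-continuous information algebras. Then $([\Phi\rightarrow\Psi]_c,D\times E)$, with pointwise combination $(f\otimes g)(\phi)=f(\phi)\otimes g(\phi)$ and focusing $f^{\Rightarrow(x,y)}(\phi)=(f(\phi^{\Rightarrow x}))^{\Rightarrow y}$, is a domain-free s-continuous information algebra.
   Context: A domain-free information algebra $(\Phi,D)$ consists of a set $\Phi$, a lattice $D$, a combination $\otimes$ and a focusing $(\psi,x)\mapsto\psi^{\Rightarrow x}$ ($x\in D$) such that: $\otimes$ is associative, commutative with neutral element $e$; $(\psi^{\Rightarrow y})^{\Rightarrow x}=\psi^{\Rightarrow x\wedge y}$; $(\phi^{\Rightarrow x}\otimes\psi)^{\Rightarrow x}=\phi^{\Rightarrow x}\otimes\psi^{\Rightarrow x}$; every $\psi$ has some $x$ with $\psi^{\Rightarrow x}=\psi$; $\psi\otimes\psi^{\Rightarrow x}=\psi$. Order: $\psi\le\phi$ iff $\psi\otimes\phi=\phi$; suprema refer to this order. $a\ll b$ means: for every directed $X$ with $b\le\vee X$ there is $c\in X$ with $a\le c$. $(\Phi,D)$, with $D$ having a top element, is continuous (resp. s-continuous) if there exists $\Gamma\subseteq\Phi$, closed under combination and containing $e$, such that every directed subset of $\Gamma$ has a supremum in $\Phi$ and $\phi=\vee\{\psi\in\Gamma:\psi\ll\phi\}$ for all $\phi$ (resp. $\phi^{\Rightarrow x}=\vee\{\psi\in\Gamma:\psi=\psi^{\Rightarrow x}\ll\phi\}$ for all $\phi,x$). $[\Phi\rightarrow\Psi]_c$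 denotes the set of maps $f:\Phi\to\Psi$ with $f(\vee X)=\vee f(X)$ for every directed $X\subseteq\Phi$; $D\times E$ is the product lattice. *)

(* Defs.v *)
From HB Require Import structures.
From mathcomp Require Import all_boot all_order.
Set Implicit Arguments. Unset Strict Implicit. Unset Printing Implicit Defensive.
Import Order.TTheory.
Local Open Scope order_scope.

Section InfoAlg.
Variable Phi : Type.
Variable comb : Phi -> Phi -> Phi.

Definition ia_le (psi phi : Phi) : Prop := comb psi phi = phi.

Definition is_upper (X : Phi -> Prop) (s : Phi) : Prop :=
  forall a, X a -> ia_le a s.

Definition is_sup (X : Phi -> Prop) (s : Phi) : Prop :=
  is_upper X s /\ forall u, is_upper X u -> ia_le s u.

Definition directed (X : Phi -> Prop) : Prop :=
  (exists a, X a) /\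
  forall a b, X a -> X b -> exists c, X c /\ ia_le a c /\ ia_le b c.

Definition way_below (a b : Phi) : Prop :=
  forall X s, directed X -> is_sup X s -> ia_le b s ->
  exists c, X c /\ ia_le a c.
End InfoAlg.

Record is_info_alg (Phi : Type) (d : Order.disp_t) (D : latticeType d)
    (comb : Phi -> Phi -> Phi) (e : Phi) (foc : Phi -> D -> Phi) : Prop := {
  ia_assoc : forall a b c, comb a (comb b c) = comb (comb a b) c;
  ia_comm : forall a b, comb a b = comb b a;
  ia_neutral : forall a, comb e a = a;
  ia_foc_trans : forall psi x y, foc (foc psi y) x = foc psi (x `&` y);
  ia_foc_comb : forall phi psi x,
      foc (comb (foc phi x) psi) x = comb (foc phi x) (foc psi x);
  ia_support : forall psi, exists x, foc psi x = psi;
  ia_idem : forall psi x, comb psi (foc psi x) = psi }.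

Definition s_continuous (Phi : Type) (d : Order.disp_t) (D : tLatticeType d)
    (comb : Phi -> Phi -> Phi) (e : Phi) (foc : Phi -> D -> Phi) : Prop :=
  exists Gamma : Phi -> Prop,
    (forall a b, Gamma a -> Gamma b -> Gamma (comb a b)) /\ Gamma e /\
    (forall X : Phi -> Prop, (forall a, X a -> Gamma a) -> directed comb X ->
        exists s, is_sup comb X s) /\
    (forall phi x, is_sup comb
        (fun psi => Gamma psi /\ psi = foc psi x /\ way_below comb psi phi)
        (foc phi x)).

Definition s_cont_info_alg (Phi : Type) (d : Order.disp_t) (D : tLatticeType d)
    (comb : Phi -> Phi -> Phi) (e : Phi) (foc : Phi -> D -> Phi) : Prop :=
  is_info_alg comb e foc /\ s_continuous comb e foc.

Definition dir_continuous (Phi Psi : Type) (combP : Phi -> Phi -> Phi)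
    (combQ : Psi -> Psi -> Psi) (f : Phi -> Psi) : Prop :=
  forall (X : Phi -> Prop) s, directed combP X -> is_sup combP X s ->
    is_sup combQ (fun b => exists a, X a /\ b = f a) (f s).

Definition cont_maps (Phi Psi : Type) (combP : Phi -> Phi -> Phi)
    (combQ : Psi -> Psi -> Psi) : Type :=
  {f : Phi -> Psi | dir_continuous combP combQ f}.

(* Main.v *)
Require Import Defs.
From HB Require Import structures.
From mathcomp Require Import all_boot all_order.
From Stdlib Require Import Classical ClassicalDescription ProofIrrelevance FunctionalExtensionality IndefiniteDescription.
Local Open Scope order_scope.
Import Order.TTheory.
Set Implicit Arguments. Unset Strict Implicit.

Lemma L_idem T d (D : latticeType d) comb (e : T) (foc : T -> D -> T) (H : is_info_alg comb e foc) a :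
  comb a a = a.
Proof. destruct (ia_support H a) as [x Hx].
  transitivity (comb a (foc a x)); [now rewrite Hx | apply (ia_idem H)]. Qed.

Lemma L_refl T d (D : latticeType d) comb (e : T) (foc : T -> D -> T) (H : is_info_alg comb e foc) a :
  ia_le comb a a.
Proof. apply (L_idem H). Qed.

Lemma L_trans T d (D : latticeType d) comb (e : T) (foc : T -> D -> T) (H : is_info_alg comb e foc) a b c :
  ia_le comb a b -> ia_le comb b c -> ia_le comb a c.
Proof. unfold ia_le; intros h1 h2. rewrite -h2 (ia_assoc H) h1; auto. Qed.

Lemma L_antisym T d (D : latticeType d) comb (e : T) (foc : T -> D -> T) (H : is_info_alg comb e foc) a b :
  ia_le comb a b -> ia_le comb b a -> a = b.
Proof. unfold ia_le; intros h1 h2. rewrite -h1 (ia_comm H) h2; auto. Qed.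

Lemma L_combl T d (D : latticeType d) comb (e : T) (foc : T -> D -> T) (H : is_info_alg comb e foc) a b :
  ia_le comb a (comb a b).
Proof. unfold ia_le. rewrite (ia_assoc H) (L_idem H); auto. Qed.

Lemma L_combr T d (D : latticeType d) comb (e : T) (foc : T -> D -> T) (H : is_info_alg comb e foc) a b :
  ia_le comb b (comb a b).
Proof. rewrite (ia_comm H). apply (L_combl H). Qed.

Lemma L_lub T d (D : latticeType d) comb (e : T) (foc : T -> D -> T) (H : is_info_alg comb e foc) a b u :
  ia_le comb a u -> ia_le comb b u -> ia_le comb (comb a b) u.
Proof. unfold ia_le; intros h1 h2. rewrite -(ia_assoc H) h2 h1; auto. Qed.

Lemma L_e T d (D : latticeType d) comb (e : T) (foc : T -> D -> T) (H : is_info_alg comb e foc) a :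
  ia_le comb e a.
Proof. apply (ia_neutral H). Qed.

Lemma L_foc T d (D : latticeType d) comb (e : T) (foc : T -> D -> T) (H : is_info_alg comb e foc) a x :
  ia_le comb (foc a x) a.
Proof. unfold ia_le. rewrite (ia_comm H). apply (ia_idem H). Qed.

Lemma L_focmono T d (D : latticeType d) comb (e : T) (foc : T -> D -> T) (H : is_info_alg comb e foc) a b x :
  ia_le comb a b -> ia_le comb (foc a x) (foc b x).
Proof. unfold ia_le; intro h.
  rewrite -(ia_foc_comb H).
  assert (E : comb (foc a x) b = b).
  { rewrite -{1}h. rewrite (ia_assoc H). 
    rewrite (L_foc H a x). exact h. }
  rewrite E; auto. Qed.

Lemma L_focidem T d (D : latticeType d) comb (e : T) (foc : T -> D -> T) (H : is_info_alg comb e foc) a x :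
  foc (foc a x) x = foc a x.
Proof. rewrite (ia_foc_trans H) meetxx; auto. Qed.

Lemma L_foce T d (D : latticeType d) comb (e : T) (foc : T -> D -> T) (H : is_info_alg comb e foc) x :
  foc e x = e.
Proof. apply (L_antisym H); [apply (L_foc H) | apply (L_e H)]. Qed.

Lemma L_foctop T d (D : tLatticeType d) comb (e : T) (foc : T -> D -> T) (H : is_info_alg comb e foc) a :
  foc a \top = a.
Proof. destruct (ia_support H a) as [x Hx].
  rewrite -Hx (ia_foc_trans H) meet1x; auto. Qed.

Lemma sup_unique T d (D : latticeType d) comb (e : T) (foc : T -> D -> T) (H : is_info_alg comb e foc) X s t :
  is_sup comb X s -> is_sup comb X t -> s = t.
Proof. intros [u1 l1] [u2 l2]. apply (L_antisym H); auto. Qed.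

Lemma is_sup_ext T comb (X Y : T -> Prop) s :
  (forall a, X a <-> Y a) -> is_sup comb X s -> is_sup comb Y s.
Proof. intros E [u l]. split.
  - intros a Ya. apply u, E, Ya.
  - intros v hv. apply l. intros a Xa. apply hv, E, Xa. Qed.

Lemma wb_le T d (D : latticeType d) comb (e : T) (foc : T -> D -> T) (H : is_info_alg comb e foc) a b :
  way_below comb a b -> ia_le comb a b.
Proof. intro w. destruct (w (fun c => c = b) b) as [c [-> h]]; auto.
  - split. exists b; auto. intros a0 b0 -> ->. exists b. split; auto. split; apply (L_refl H).
  - split. intros a0 ->. apply (L_refl H). intros u hu. apply hu; auto.
  - apply (L_refl H). Qed.

Lemma wb_mono T d (D : latticeType d) comb (e : T) (foc : T -> D -> T) (H : is_info_alg comb e foc) a a' b b' :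
  ia_le comb a' a -> way_below comb a b -> ia_le comb b b' -> way_below comb a' b'.
Proof. intros h1 w h2 X s dX sX hb. destruct (w X s) as [c [Xc hc]]; auto.
  - apply (L_trans H) with b'; auto.
  - exists c. split; auto. apply (L_trans H) with a; auto. Qed.

Lemma wb_e T d (D : latticeType d) comb (e : T) (foc : T -> D -> T) (H : is_info_alg comb e foc) b :
  way_below comb e b.
Proof. intros X s [[c Xc] _] _ _. exists c. split; auto. apply (L_e H). Qed.

Lemma wb_comb T d (D : latticeType d) comb (e : T) (foc : T -> D -> T) (H : is_info_alg comb e foc) a b c :
  way_below comb a c -> way_below comb b c -> way_below comb (comb a b) c.
Proof. intros w1 w2 X s dX sX hc.
  destruct (w1 X s dX sX hc) as [c1 [X1 h1]].
  destruct (w2 X s dX sX hc) as [c2 [X2 h2]].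
  destruct (proj2 dX c1 c2 X1 X2) as [c3 [X3 [h13 h23]]].
  exists c3. split; auto. apply (L_lub H); eapply (L_trans H); eauto. Qed.

Lemma dir_image T d (D : latticeType d) comb (e : T) (foc : T -> D -> T) (H : is_info_alg comb e foc)
  U combU (f : U -> T) (X : U -> Prop) :
  (forall a b, ia_le combU a b -> ia_le comb (f a) (f b)) ->
  directed combU X -> directed comb (fun b => exists a, X a /\ b = f a).
Proof. intros m [[a Xa] dX]. split.
  - exists (f a). eauto.
  - intros b1 b2 [a1 [X1 ->]] [a2 [X2 ->]]. destruct (dX a1 a2 X1 X2) as [c [Xc [h1 h2]]].
    exists (f c). split; eauto. Qed.

Lemma cont_mono T d (D : latticeType d) comb (e : T) (foc : T -> D -> T) (H : is_info_alg comb e foc)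
  U combU (f : T -> U) a b :
  dir_continuous comb combU f -> ia_le comb a b -> ia_le combU (f a) (f b).
Proof. intros c h.
  destruct (c (fun x => x = a \/ x = b) b) as [u _].
  - split; [exists a; auto|].
    intros a0 b0 h0 h1; exists b; split; [right; reflexivity|].
    destruct h0 as [-> | ->]; destruct h1 as [-> | ->]; split; auto; apply (L_refl H).
  - split. intros x [-> | ->]; auto. apply (L_refl H). intros v hv. apply hv; auto.
  - apply u. exists a; auto. Qed.

Lemma cont_comp T d (D : latticeType d) comb (e : T) (foc : T -> D -> T) (H : is_info_alg comb e foc)
  U d1 (D1 : latticeType d1) combU (eU : U) (focU : U -> D1 -> U) (HU : is_info_alg combU eU focU)
  V combV (f : T -> U) (g : U -> V) :
  dir_continuous comb combU f -> dir_continuous combU combV g ->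
  dir_continuous comb combV (fun x => g (f x)).
Proof. intros cf cg X s dX sX.
  have dY := dir_image HU (fun a b hab => cont_mono H cf hab) dX.
  have sY := cf X s dX sX.
  have := cg _ _ dY sY. apply is_sup_ext. intros v; split.
  - intros [u [[a [Xa ->]] ->]]. eauto.
  - intros [a [Xa ->]]. exists (f a). split; eauto. Qed.

Lemma cont_comb T combT U d (D : latticeType d) comb (e : U) (foc : U -> D -> U) (H : is_info_alg comb e foc)
  (f g : T -> U) :
  dir_continuous combT comb f -> dir_continuous combT comb g ->
  dir_continuous combT comb (fun x => comb (f x) (g x)).
Proof. intros cf cg X s dX sX.
  destruct (cf X s dX sX) as [uf lf]. destruct (cg X s dX sX) as [ug lg]. split.
  - intros v [a [Xa ->]]. apply (L_lub H).
    + apply (L_trans H) with (f s). apply uf; eauto. apply (L_combl H).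
    + apply (L_trans H) with (g s). apply ug; eauto. apply (L_combr H).
  - intros u hu. apply (L_lub H).
    + apply lf. intros v [a [Xa ->]]. apply (L_trans H) with (comb (f a) (g a)).
      apply (L_combl H). apply hu; eauto.
    + apply lg. intros v [a [Xa ->]]. apply (L_trans H) with (comb (f a) (g a)).
      apply (L_combr H). apply hu; eauto. Qed.

Lemma cont_const T combT U d (D : latticeType d) comb (e : U) (foc : U -> D -> U) (H : is_info_alg comb e foc) :
  dir_continuous combT comb (fun _ : T => e).
Proof. intros X s dX sX. split.
  - intros v [a [_ ->]]. apply (L_refl H).
  - intros u _. apply (L_e H). Qed.

Lemma dcpo_aux T d (D : tLatticeType d) comb (e : T) (foc : T -> D -> T) (H : is_info_alg comb e foc)
  (HS : s_continuous comb e foc) Z :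
  directed comb Z -> exists Y t, directed comb Y /\ is_sup comb Y t /\ is_sup comb Z t /\
     forall p, Y p -> exists z, Z z /\ way_below comb p z.
Proof. intro dZ. destruct HS as [G [G1 [G2 [G3 G4]]]].
  set Y := fun p => G p /\ exists z, Z z /\ way_below comb p z.
  assert (dY : directed comb Y).
  { destruct dZ as [[z Zz] dZ]. split.
    - exists e. split; auto. exists z. split; auto. apply (wb_e H).
    - intros p1 p2 [Gp1 [z1 [Z1 w1]]] [Gp2 [z2 [Z2 w2]]].
      destruct (dZ z1 z2 Z1 Z2) as [z3 [Z3 [h1 h2]]].
      exists (comb p1 p2). split; [split|split].
      + auto.
      + exists z3. split; auto. apply (wb_comb H).
        * apply (wb_mono H) with p1 z1; auto. apply (L_refl H).
        * apply (wb_mono H) with p2 z2; auto. apply (L_refl H).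
      + apply (L_combl H).
      + apply (L_combr H). }
  destruct (G3 Y (fun a h => proj1 h) dY) as [t st].
  exists Y, t. split; [auto|split; [auto|split]].
  - split.
    + intros z Zz. have := G4 z \top. rewrite (L_foctop H z). intros [_ l].
      apply l. intros a [Ga [_ w]]. apply (proj1 st). split; auto. eauto.
    + intros u hu. apply (proj2 st). intros p [_ [z [Zz w]]].
      apply (L_trans H) with z. apply (wb_le H w). apply hu; auto.
  - intros p [_ h]. exact h. Qed.

Lemma dcpo T d (D : tLatticeType d) comb (e : T) (foc : T -> D -> T) (H : is_info_alg comb e foc)
  (HS : s_continuous comb e foc) Z :
  directed comb Z -> exists t, is_sup comb Z t.
Proof. intro dZ. destruct (dcpo_aux H HS dZ) as [Y [t [_ [_ [h _]]]]]. eauto. Qed.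

Lemma interp T d (D : tLatticeType d) comb (e : T) (foc : T -> D -> T) (H : is_info_alg comb e foc)
  (HS : s_continuous comb e foc) Z s b :
  directed comb Z -> is_sup comb Z s -> way_below comb b s -> exists z, Z z /\ way_below comb b z.
Proof. intros dZ sZ w. destruct (dcpo_aux H HS dZ) as [Y [t [dY [sY [sZ' hY]]]]].
  have E := sup_unique H sZ sZ'. subst t.
  destruct (w Y s dY sY (L_refl H s)) as [p [Yp hp]].
  destruct (hY p Yp) as [z [Zz wz]]. exists z. split; auto.
  apply (wb_mono H) with p z; auto. apply (L_refl H). Qed.

Lemma basis T d (D : tLatticeType d) comb (e : T) (foc : T -> D -> T) (H : is_info_alg comb e foc)
  (HS : s_continuous comb e foc) phi :
  exists A, directed comb A /\ is_sup comb A phi /\ forall a, A a -> way_below comb a phi.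
Proof. destruct HS as [G [G1 [G2 [G3 G4]]]].
  exists (fun a => G a /\ a = foc a \top /\ way_below comb a phi). split; [|split].
  - split.
    + exists e. split; auto. split. rewrite (L_foctop H); auto. apply (wb_e H).
    + intros a b [Ga [_ wa]] [Gb [_ wb]]. exists (comb a b). split; [split; [auto|split]|split].
      * rewrite (L_foctop H); auto.
      * apply (wb_comb H); auto.
      * apply (L_combl H).
      * apply (L_combr H).
  - have := G4 phi \top. rewrite (L_foctop H phi). auto.
  - intros a [_ [_ w]]; auto. Qed.

Lemma basis_foc T d (D : tLatticeType d) comb (e : T) (foc : T -> D -> T)
  (HS : s_continuous comb e foc) psi y :
  exists B, is_sup comb B (foc psi y) /\ forall b, B b -> b = foc b y /\ way_below comb b psi.
Proof. destruct HS as [G [G1 [G2 [G3 G4]]]].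
  exists (fun a => G a /\ a = foc a y /\ way_below comb a psi). split.
  - apply G4.
  - intros b [_ h]; exact h. Qed.

Lemma foc_cont T d (D : tLatticeType d) comb (e : T) (foc : T -> D -> T) (H : is_info_alg comb e foc)
  (HS : s_continuous comb e foc) x :
  dir_continuous comb comb (fun p => foc p x).
Proof. intros X s dX sX. split.
  - intros v [a [Xa ->]]. apply (L_focmono H). apply (proj1 sX); auto.
  - intros u hu. destruct HS as [G [G1 [G2 [G3 G4]]]].
    apply (proj2 (G4 s x)). intros p [_ [Ep w]].
    destruct (w X s dX sX (L_refl H s)) as [c [Xc hc]].
    rewrite Ep. apply (L_trans H) with (foc c x).
    apply (L_focmono H). exact hc. apply hu. eauto. Qed.

Definition step T U (comb : T -> T -> T) d (D : latticeType d) (foc : T -> D -> T) (eU : U)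
  (a : T) (b : U) (x : D) (p : T) : U :=
  if excluded_middle_informative (way_below comb a (foc p x)) then b else eU.

Lemma step_cont T d (D : tLatticeType d) comb (e : T) (foc : T -> D -> T) (H : is_info_alg comb e foc)
  (HS : s_continuous comb e foc)
  U d1 (D1 : latticeType d1) combU (eU : U) (focU : U -> D1 -> U) (HU : is_info_alg combU eU focU)
  a b x : dir_continuous comb combU (step comb foc eU a b x).
Proof. intros X s dX sX.
  have fc := foc_cont H HS x dX sX.
  have dY := dir_image H (fun _ _ h => L_focmono H x h) dX.
  unfold step.
  destruct (excluded_middle_informative (way_below comb a (foc s x))) as [w|nw].
  - destruct (interp H HS dY fc w) as [z [[c [Xc ->]] wc]]. split.
    + intros v [c' [_ ->]].
      destruct (excluded_middle_informative (way_below comb a (foc c' x))).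
      apply (L_refl HU). apply (L_e HU).
    + intros u hu. apply hu. exists c. split; auto.
      destruct (excluded_middle_informative (way_below comb a (foc c x))); auto.
      contradiction.
  - split.
    + intros v [c [Xc ->]].
      destruct (excluded_middle_informative (way_below comb a (foc c x))) as [w'|].
      * exfalso. apply nw. apply (wb_mono H) with a (foc c x); auto. apply (L_refl H).
        apply (L_focmono H). apply (proj1 sX c Xc).
      * apply (L_refl HU).
    + intros u _. apply (L_e HU). Qed.

Lemma F_eq Phi Psi (combP : Phi -> Phi -> Phi) (combQ : Psi -> Psi -> Psi)
  (f g : cont_maps combP combQ) : (forall p, sval f p = sval g p) -> f = g.
Proof. destruct f as [f hf], g as [g hg]; simpl. intro E.
  have E' : f = g by apply functional_extensionality.
  subst g. f_equal. apply proof_irrelevance. Qed.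

Theorem theorem3p14
  (Phi : Type) (d : Order.disp_t) (D : tLatticeType d)
  (combP : Phi -> Phi -> Phi) (eP : Phi) (focP : Phi -> D -> Phi)
  (Psi : Type) (d' : Order.disp_t) (E : tLatticeType d')
  (combQ : Psi -> Psi -> Psi) (eQ : Psi) (focQ : Psi -> E -> Psi) :
  s_cont_info_alg combP eP focP ->
  s_cont_info_alg combQ eQ focQ ->
  exists (combF : cont_maps combP combQ -> cont_maps combP combQ -> cont_maps combP combQ)
         (eF : cont_maps combP combQ)
         (focF : cont_maps combP combQ -> (D *p E)%type -> cont_maps combP combQ),
    (forall f g phi, sval (combF f g) phi = combQ (sval f phi) (sval g phi)) /\
    (forall f (xy : (D *p E)%type) phi,
        sval (focF f xy) phi = focQ (sval f (focP phi xy.1)) xy.2) /\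
    s_cont_info_alg combF eF focF.
Proof.
  intros [HP SP] [HQ SQ].
  pose combF := fun f g : cont_maps combP combQ =>
    exist (dir_continuous combP combQ) (fun p => combQ (sval f p) (sval g p))
      (cont_comb HQ (proj2_sig f) (proj2_sig g)).
  pose eF := exist (dir_continuous combP combQ) (fun _ => eQ) (@cont_const Phi combP _ _ _ _ _ _ HQ).
  pose focF := fun (f : cont_maps combP combQ) (xy : (D *p E)%type) =>
    exist (dir_continuous combP combQ) (fun p => focQ (sval f (focP p xy.1)) xy.2)
      (cont_comp HP HP (foc_cont HP SP xy.1) (cont_comp HP HQ (proj2_sig f) (foc_cont HQ SQ xy.2))).
  exists combF, eF, focF. split; [reflexivity|split; [reflexivity|]].

  have HF : is_info_alg combF eF focF.
  { constructor.
    - intros a b c. apply F_eq; intro p; simpl. apply (ia_assoc HQ).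
    - intros a b. apply F_eq; intro p; simpl. apply (ia_comm HQ).
    - intros a. apply F_eq; intro p; simpl. apply (ia_neutral HQ).
    - intros f [x1 y1] [x2 y2]. apply F_eq; intro p; simpl.
      rewrite (ia_foc_trans HP) (ia_foc_trans HQ) (meetC x2 x1). reflexivity.
    - intros f g [x y]. apply F_eq; intro p; simpl.
      rewrite (L_focidem HP). apply (ia_foc_comb HQ).
    - intros f. exists ((\top, \top) : (D *p E)%type). apply F_eq; intro p; simpl.
      rewrite (L_foctop HP) (L_foctop HQ). reflexivity.
    - intros f [x y]. apply F_eq; intro p; simpl.
      rewrite (ia_comm HQ). change (ia_le combQ (focQ (sval f (focP p x)) y) (sval f p)).
      apply (L_trans HQ) with (sval f (focP p x)). apply (L_foc HQ).
      apply (cont_mono HP (proj2_sig f)). apply (L_foc HP). }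
  have le_F_pw : forall f g, ia_le combF f g -> forall p, ia_le combQ (sval f p) (sval g p).
  { intros f g h p. unfold ia_le. change (sval (combF f g) p = sval g p). rewrite h. reflexivity. }
  have pw_le_F : forall f g, (forall p, ia_le combQ (sval f p) (sval g p)) -> ia_le combF f g.
  { intros f g h. apply F_eq. intro p. simpl. apply h. }
  have dZ : forall X, directed combF X -> forall p,
      directed combQ (fun b => exists g, X g /\ b = sval g p).
  { intros X dX p. exact (dir_image HQ (combU := combF) (f := fun g : cont_maps combP combQ => sval g p)
      (fun a b h => le_F_pw a b h p) dX). }
  have pw_sup : forall X, directed combF X -> exists P, is_sup combF X P /\
      forall p, is_sup combQ (fun b => exists g, X g /\ b = sval g p) (sval P p).
  { intros X dX.
    have ex : forall p, exists t, is_sup combQ (fun b => exists g, X g /\ b = sval g p) t.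
    { intro p. apply (dcpo HQ SQ (dZ X dX p)). }
    pose pf := fun p => proj1_sig (constructive_indefinite_description _ (ex p)).
    have hpf : forall p, is_sup combQ (fun b => exists g, X g /\ b = sval g p) (pf p).
    { intro p. exact (proj2_sig (constructive_indefinite_description _ (ex p))). }
    have cpf : dir_continuous combP combQ pf.
    { intros X0 s dX0 sX0. split.
      - intros v [a [X0a ->]]. apply (proj2 (hpf a)). intros w [g [Xg ->]].
        apply (L_trans HQ) with (sval g s).
        apply (cont_mono HP (proj2_sig g)). apply (proj1 sX0 a X0a).
        apply (proj1 (hpf s)); eauto.
      - intros u hu. apply (proj2 (hpf s)). intros w [g [Xg ->]].
        apply (proj2 ((proj2_sig g) X0 s dX0 sX0)). intros v [a [X0a ->]].
        apply (L_trans HQ) with (pf a). apply (proj1 (hpf a)); eauto. apply hu; eauto. }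
    exists (exist _ pf cpf). split; [split|].
    - intros g Xg. apply pw_le_F. intro p. apply (proj1 (hpf p)); eauto.
    - intros u hu. apply pw_le_F. intro p. apply (proj2 (hpf p)). intros w [g [Xg ->]].
      apply le_F_pw. auto.
    - exact hpf. }
  have sup_pw : forall X S, directed combF X -> is_sup combF X S -> forall p,
      is_sup combQ (fun b => exists g, X g /\ b = sval g p) (sval S p).
  { intros X S dX sX. destruct (pw_sup X dX) as [P [sP hP]].
    rewrite (sup_unique HF sX sP). exact hP. }
  pose stepF := fun a b x => exist (dir_continuous combP combQ) (step combP focP eQ a b x)
     (step_cont HP SP HQ a b x).
  have stepF_wb : forall a b x f, way_below combQ b (sval f a) -> way_below combF (stepF a b x) f.
  { intros a b x f w X S dX sX hfS.
    destruct (w _ _ (dZ X dX a) (sup_pw X S dX sX a) (le_F_pw _ _ hfS a)) as [v [[g [Xg ->]] hb]].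
    exists g. split; auto. apply pw_le_F. intro p. simpl. unfold step.
    destruct (excluded_middle_informative (way_below combP a (focP p x))) as [wa|].
    - apply (L_trans HQ) with (sval g a); auto.
      apply (cont_mono HP (proj2_sig g)). apply (L_trans HP) with (focP p x).
      apply (wb_le HP wa). apply (L_foc HP).
    - apply (L_e HQ). }
  have stepF_fix : forall a b x y, b = focQ b y -> focF (stepF a b x) (x, y) = stepF a b x.
  { intros a b x y Eb. apply F_eq; intro p. simpl. unfold step.
    rewrite (L_focidem HP).
    destruct (excluded_middle_informative (way_below combP a (focP p x))).
    - symmetry; exact Eb.
    - apply (L_foce HQ). }
  split; [exact HF|].
  exists (fun _ => True). split; [auto|split; [auto|split]].
  - intros X _ dX. destruct (pw_sup X dX) as [P [h _]]. eauto.
  - intros f [x y]. split.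
    + intros g [_ [Eg w]]. rewrite Eg. apply (L_focmono HF). apply (wb_le HF w).
    + intros u hu. apply pw_le_F. intro p. simpl.
      destruct (basis_foc SQ (sval f (focP p x)) y) as [B [sB hB]].
      apply (proj2 sB). intros b Bb. destruct (hB b Bb) as [Eb wb].
      destruct (basis HP SP (focP p x)) as [A [dA [sA hA]]].
      have sfA := proj2_sig f A _ dA sA.
      have dfA := dir_image HQ (fun a1 a2 h => cont_mono HP (proj2_sig f) h) dA.
      destruct (interp HQ SQ dfA sfA wb) as [v [[a [Aa ->]] wv]].
      have Hin : True /\ stepF a b x = focF (stepF a b x) (x, y) /\ way_below combF (stepF a b x) f.
      { split; [exact I| split; [symmetry; apply stepF_fix; exact Eb | apply stepF_wb; exact wv]]. }
      have g_le := hu (stepF a b x) Hin.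
      have := le_F_pw _ _ g_le p. simpl. unfold step.
      destruct (excluded_middle_informative (way_below combP a (focP p x))) as [w0|n]; auto.
      exfalso; apply n, hA, Aa.
Qed.
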